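(* Fix integers $d,n$ with $2\leq n\leq d+1$, and real numbers $\tau,c>0$. Every $n$-point configuration $X=\{x_i\}_{i\in[n]}$ in the unit sphere $S^{d-1}\subseteq\mathbb{R}^d$ that minimizes $\mathcal{L}_{\tau,c}(X):=\sum_{k=1}^n\log\big(c+\sum_{j\neq k}\exp(\langle x_j,x_k\rangle/\tau)\big)$ satisfies $\sum_{i=1}^n x_i=0$ and $\langle x_i,x_j\rangle=-\frac{1}{n-1}$ for all $i\neq j$ in $[n]$.
   Context: $[n]=\{1,\ldots,n\}$; minimization is over all $n$-point configurations in $S^{d-1}$. *)

(* Defs.v *)
From HB Require Import structures.
From mathcomp Require Import all_boot all_order all_algebra.
From mathcomp Require Import all_classical all_reals all_analysis.
Set Implicit Arguments. Unset Strict Implicit. Unset Printing Implicit Defensive.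
Import Order.TTheory GRing.Theory Num.Theory.
Local Open Scope ring_scope.

Definition dotp (R : realType) (d : nat) (x y : 'rV[R]_d) : R :=
  \sum_(l < d) x ord0 l * y ord0 l.

Definition on_sphere (R : realType) (d : nat) (x : 'rV[R]_d) : Prop :=
  dotp x x = 1.

Definition sphere_config (R : realType) (d n : nat) (X : 'I_n -> 'rV[R]_d) : Prop :=
  forall i, on_sphere (X i).

Definition loss (R : realType) (d n : nat) (tau c : R) (X : 'I_n -> 'rV[R]_d) : R :=
  \sum_(k < n) ln (c + \sum_(j < n | j != k) expR (dotp (X j) (X k) / tau)).

(* Main.v *)
Require Import Defs.
From HB Require Import structures.
From mathcomp Require Import all_boot all_order all_algebra.
From mathcomp Require Import all_classical all_reals all_analysis.
From mathcomp Require Import ring lra zify.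
Import Order.TTheory GRing.Theory Num.Theory.
Local Open Scope ring_scope.



Lemma expR_eq1Dx (R : realType) (x : R) : expR x = 1 + x -> x = 0.
Proof.
move=> h; apply/eqP; apply/negPn/negP => hx.
have e2 : expR x = expR (x / 2) * expR (x / 2) by rewrite -expRD; congr expR; field.
have hp : 0 < expR (x/2) := expR_gt0 _.
have hge := expR_ge1Dx (x/2).
case: (ltrP (1 + x/2) 0) => h1.
  have := expR_gt0 x; lra.
have : (1 + x/2) * (1 + x/2) <= expR (x/2) * expR (x/2).
  by apply: ler_pM.
have hx2 : 0 < x * x by rewrite lt0r mulf_neq0 //= -expr2 sqr_ge0.
rewrite -e2 h; nra.
Qed.

Lemma exp_tangent (R : realType) (t a : R) :
  expR a = expR t + expR t * (a - t) + expR t * (expR (a - t) - 1 - (a - t)).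
Proof. have -> : expR a = expR (t + (a - t)) by congr expR; ring.
rewrite expRD; ring. Qed.

Lemma exp_convex (R : realType) (p u : R) : 0 <= p <= 1 ->
  expR (p * u) <= (1 - p) + p * expR u.
Proof.
move=> /andP[p0 p1].
have h1 := expR_ge1Dx ((1 - p) * u).
have h2 := expR_ge1Dx (- (p * u)).
have e1 : expR u = expR (p * u) * expR ((1 - p) * u) by rewrite -expRD; congr expR; ring.
have e2 : 1 = expR (p * u) * expR (- (p * u)) by rewrite -expRD subrr expR0.
have hp := expR_gt0 (p * u).
have a1 : expR (p*u) * (1 + (1 - p) * u) <= expR u by rewrite e1 ler_pM2l.
have a2 : expR (p*u) * (1 - (p * u)) <= 1 by rewrite {2}e2 ler_pM2l.
nra.
Qed.

Lemma g_tangent (R : realType) (c A t0 t : R) : 0 < c -> 0 < A ->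
  ln (c + A * expR t0) + (A * expR t0 / (c + A * expR t0)) * (t - t0)
  <= ln (c + A * expR t).
Proof.
move=> hc hA.
set K := c + A * expR t0.
have hE := expR_gt0 t0.
have hK : 0 < K by rewrite /K; apply: addr_gt0 => //; apply: mulr_gt0.
set p := A * expR t0 / K.
have hp0 : 0 <= p by rewrite /p; apply: divr_ge0; [apply: mulr_ge0; apply: ltW|apply: ltW].
have hp1 : p <= 1.
  rewrite /p ler_pdivrMr // mul1r /K lerDr; exact: ltW.
have := (@exp_convex R p (t - t0)); rewrite hp0 hp1.
move=> hc2.
have eq1 : c + A * expR t = K * ((1 - p) + p * expR (t - t0)).
  rewrite /p expRB /K; field; apply/andP; split; rewrite gt_eqF //.
have hpos : 0 < K * expR (p * (t - t0)) by apply: mulr_gt0 => //; exact: expR_gt0.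
have hpos2 : 0 < c + A * expR t by apply: addr_gt0 => //; apply: mulr_gt0 => //; exact: expR_gt0.
have : ln (K * expR (p * (t - t0))) <= ln (c + A * expR t).
  rewrite ler_ln ?posrE //.
  by rewrite eq1 ler_pM2l //; apply: hc2.
rewrite (@lnM R K (expR (p * (t - t0)))) ?posrE ?expR_gt0 // expRK.
by [].
Qed.



Lemma dotpC (R : realType) d (x y : 'rV[R]_d) : dotp x y = dotp y x.
Proof. by rewrite /dotp; apply: eq_bigr => l _; rewrite mulrC. Qed.

Lemma dotp_suml (R : realType) d n (X : 'I_n -> 'rV[R]_d) y :
  dotp (\sum_(i < n) X i) y = \sum_(i < n) dotp (X i) y.
Proof.
rewrite /dotp exchange_big /=; apply: eq_bigr => l _.
by rewrite summxE mulr_suml.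
Qed.

Lemma dotp_ge0 (R : realType) d (x : 'rV[R]_d) : 0 <= dotp x x.
Proof. by rewrite /dotp; apply: sumr_ge0 => l _; rewrite -expr2 sqr_ge0. Qed.

Lemma dotp_eq0 (R : realType) d (x : 'rV[R]_d) : dotp x x = 0 -> x = 0.
Proof.
move=> h; apply/rowP => l; rewrite mxE.
have H := @psumr_eq0P R _ xpredT (fun k => (x ord0 k) ^+ 2) (fun k _ => sqr_ge0 (x ord0 k)).
have : (x ord0 l) ^+ 2 = 0.
  apply: (H _ l isT); rewrite /dotp in h; rewrite -[RHS]h; by apply: eq_bigr => k _; rewrite expr2.
by move/eqP; rewrite sqrf_eq0 => /eqP.
Qed.

Lemma sum_delta (R : realType) (i m : nat) (x : R) :
  \sum_(0 <= l < m) (if i == l then x else 0) = if (i < m)%N then x else 0.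
Proof.
elim: m => [|m IH]; first by rewrite big_geq.
rewrite big_nat_recr //= IH ltnS.
by case: (ltngtP i m) => h; rewrite ?addr0 ?add0r.
Qed.



Definition sB (R : realType) (m : nat) (b g : R) (i : nat) : R :=
  if (i < m)%N then b else g.
Arguments sB {R}.
Definition sF (R : realType) (m : nat) (a b g : R) (i l : nat) : R :=
  if (l < m)%N then (if i == l then a else 0) + sB m b g i else 0.
Arguments sF {R}.

Lemma sF_dot (R : realType) d m (a b g : R) (i j : nat) : (m <= d)%N ->
  \sum_(l < d) sF m a b g i l * sF m a b g j l =
  (if i == j then (if (i < m)%N then a * a else 0) else 0)
  + (if (i < m)%N then a else 0) * sB m b g j
  + sB m b g i * (if (j < m)%N then a else 0)
  + m%:R * (sB m b g i * sB m b g j).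
Proof.
move=> hmd.
rewrite -(big_mkord xpredT (fun l => sF m a b g i l * sF m a b g j l)).
rewrite (@big_cat_nat _ _ _ m) //=.
rewrite [X in _ + X]big_nat_cond [X in _ + X]big1 ?addr0; last first.
  by move=> l /andP[/andP[h _] _]; rewrite /sF ltnNge h /= mul0r.
rewrite (eq_big_nat _ _ (F2 := fun l =>
   (if i == l then (if j == i then a * a else 0) else 0)
   + (if i == l then a else 0) * sB m b g j
   + sB m b g i * (if j == l then a else 0)
   + sB m b g i * sB m b g j)); last first.
  move=> l /andP[_ hl]; rewrite /sF hl.
  case: (eqVneq i l) => [->|hil]; case: (eqVneq j l) => [->|hjl] //=;
    rewrite ?eqxx ?mul0r ?mulr0 ?add0r ?addr0; try ring.
rewrite !big_split /= sum_delta -mulr_suml sum_delta -mulr_sumr sum_delta.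
rewrite sumr_const_nat subn0 mulr_natl.
congr (_ + _ + _ + _).
by rewrite eq_sym; case: (i < m)%N; case: (i == j).
Qed.



Lemma simplex (R : realType) d n : (2 <= n)%N -> (n <= d.+1)%N ->
  exists Y : 'I_n -> 'rV[R]_d, sphere_config Y /\
    forall i j, i != j -> dotp (Y i) (Y j) = - (n.-1%:R)^-1.
Proof.
move=> hn2 hnd.
have hm : (0 < n.-1)%N by lia.
have hmd : (n.-1 <= d)%N by lia.
have hnm : n = n.-1.+1 by lia.
set m := n.-1.
set M : R := m%:R.
have hM : 0 < M by rewrite /M ltr0n.
have hM0 : M != 0 by rewrite gt_eqF.
set a := Num.sqrt ((M + 1) / M).
set g := Num.sqrt (M^-1).
set b := (- g - a) / M.
have ha : a ^+ 2 = (M + 1) / M.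
  by rewrite sqr_sqrtr // divr_ge0 // ?ltW // addr_gt0.
have hg : g ^+ 2 = M^-1 by rewrite sqr_sqrtr // invr_ge0 ltW.
have F2 : a * b + b * a + M * (b * b) = - M^-1.
  have -> : a * b + b * a + M * (b * b) = (g ^+ 2 - a ^+ 2) / M.
    by rewrite /b; field.
  by rewrite ha hg; field.
have F3 : a * g + M * (b * g) = - M^-1.
  have -> : a * g + M * (b * g) = - g ^+ 2 by rewrite /b; field.
  by rewrite hg.
have F1 : a * a + a * b + b * a + M * (b * b) = 1.
  have -> : a * a + a * b + b * a + M * (b * b) = a ^+ 2 + (a * b + b * a + M * (b * b)) by ring.
  by rewrite F2 ha; field.
have F5 : M * (g * g) = 1 by rewrite -expr2 hg mulfV.
set Y := fun i : 'I_n => \row_(l < d) sF m a b g i l.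
have key : forall i j : 'I_n, dotp (Y i) (Y j) =
  (if (i : nat) == j then (if (i < m)%N then a * a else 0) else 0)
  + (if (i < m)%N then a else 0) * sB m b g j
  + sB m b g i * (if (j < m)%N then a else 0)
  + M * (sB m b g i * sB m b g j).
  move=> i j; rewrite /dotp -(@sF_dot R d) //; apply: eq_bigr => l _; by rewrite !mxE.
have hord : forall i : 'I_n, ~~ (i < m)%N -> (i : nat) = m.
  move=> i; rewrite -leqNgt => h; apply/eqP; rewrite eqn_leq h andbT -ltnS -hnm.
  exact: ltn_ord.
exists Y; split.
  move=> i; rewrite /on_sphere key eqxx /sB.
  case: ifP => hi; rewrite ?mul0r ?mulr0 ?add0r //.
move=> i j hij; rewrite key /sB.
have hij' : ((i : nat) == j) = false by apply/negbTE.
rewrite hij'.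
case: (ltnP i m) => hi; case: (ltnP j m) => hj.
- rewrite add0r; exact: F2.
- rewrite mulr0 addr0 add0r; exact: F3.
- rewrite mul0r addr0 add0r (mulrC g a) (mulrC g b); exact: F3.
- exfalso; move/negbT/negP: hij'; apply; apply/eqP.
  have e1 := hord i; have e2 := hord j.
  rewrite leqNgt in hi; rewrite leqNgt in hj.
  rewrite (e1 hi) (e2 hj).
  reflexivity.
Qed.



Lemma sum_neq_const (R : realType) n (k : 'I_n) (x : R) :
  \sum_(j < n | j != k) x = n.-1%:R * x.
Proof.
rewrite big_const (@eq_card _ _ (predC1 k)) // cardC1 card_ord iter_addr addr0.
by rewrite mulr_natl.
Qed.

Lemma dotp0l (R : realType) d (y : 'rV[R]_d) : dotp 0 y = 0.
Proof. by rewrite /dotp big1 // => l _; rewrite mxE mul0r. Qed.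

Theorem lemma13 (R : realType) (d n : nat) (tau c : R)
  (hn2 : (2 <= n)%N) (hnd : (n <= d.+1)%N) (htau : 0 < tau) (hc : 0 < c)
  (X : 'I_n -> 'rV[R]_d) (hX : sphere_config X)
  (hmin : forall Y : 'I_n -> 'rV[R]_d, sphere_config Y -> loss tau c X <= loss tau c Y) :
  \sum_(i < n) X i = 0 /\
  (forall i j : 'I_n, i != j -> dotp (X i) (X j) = - (n.-1%:R)^-1).
Proof.
have [Y [hY hYd]] := @simplex R d n hn2 hnd.
have hM : 0 < n.-1%:R :> R by rewrite ltr0n; lia.
set M : R := n.-1%:R in hM hYd *.
have hM0 : M != 0 by rewrite gt_eqF.
have htau0 : tau != 0 by rewrite gt_eqF.
set ts := - M^-1 / tau.
set E := expR ts.
have hE : 0 < E := expR_gt0 _.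
set K := c + M * E.
have hK : 0 < K by apply: addr_gt0 => //; apply: mulr_gt0.
set p := M * E / K.
have hp : 0 < p by apply: divr_gt0 => //; apply: mulr_gt0.
set a := fun j k => dotp (X j) (X k) / tau.
set t := fun k : 'I_n => (\sum_(j < n | j != k) a j k) / M.
set S := \sum_(i < n) X i.
have hsumT : forall k, \sum_(j < n | j != k) dotp (X j) (X k) = dotp S (X k) - 1.
  move=> k; have hk : dotp (X k) (X k) = 1 := hX k.
  by rewrite /S dotp_suml [in RHS](bigD1 k) //= hk addrAC subrr add0r.
have ht : forall k, t k - ts = dotp S (X k) / (tau * M).
  move=> k; rewrite /t /a -mulr_suml hsumT /ts; field.
  by rewrite hM0 htau0.
have hsumt : \sum_(k < n) (t k - ts) = dotp S S / (tau * M).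
  under eq_bigr do rewrite ht.
  rewrite -mulr_suml; congr (_ * _); rewrite /S [in RHS]dotp_suml.
  by apply: eq_bigr => k _; exact: dotpC.
set D := fun j k => expR (a j k - t k) - 1 - (a j k - t k).
have hD : forall j k, 0 <= D j k by move=> j k; have := expR_ge1Dx (a j k - t k); rewrite /D; lra.
have sumE : forall k, \sum_(j < n | j != k) expR (a j k)
    = M * expR (t k) + expR (t k) * \sum_(j < n | j != k) D j k.
  move=> k.
  rewrite (eq_bigr (fun j => expR (t k) + expR (t k) * (a j k - t k) + expR (t k) * D j k));
    last by move=> j _; rewrite /D -exp_tangent.
  rewrite [LHS]big_split [in LHS]big_split /= -!mulr_sumr sum_neq_const.
  have -> : \sum_(j < n | j != k) (a j k - t k) = 0.
    by rewrite sumrB sum_neq_const /t; field.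
  by rewrite mulr0 addr0.
set L := fun k => ln (c + \sum_(j < n | j != k) expR (a j k)).
set sl := fun k => L k - ln K - p * (t k - ts).
have hsl : forall k, 0 <= sl k.
  move=> k.
  have h1 : M * expR (t k) <= \sum_(j < n | j != k) expR (a j k).
    rewrite sumE lerDl; apply: mulr_ge0; first exact: ltW (expR_gt0 _).
    by apply: sumr_ge0 => j _.
  have h2 : ln (c + M * expR (t k)) <= L k.
    have h0 : 0 < c + M * expR (t k).
      by apply: addr_gt0 => //; apply: mulr_gt0 => //; exact: expR_gt0.
    have h1' : c + M * expR (t k) <= c + \sum_(j < n | j != k) expR (a j k) by rewrite lerD2l.
    rewrite /L ler_ln ?posrE //; exact: (lt_le_trans h0 h1').
  have h3 := @g_tangent R c M ts (t k) hc hM.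
  rewrite /sl; rewrite -/E -/K -/p in h3; lra.
have hYl : loss tau c Y = ln K *+ n.
  rewrite /loss (eq_bigr (fun _ => ln K)) ?sumr_const ?card_ord // => k _.
  congr ln; rewrite /K /E (eq_bigr (fun _ => expR ts)) ?sum_neq_const // => j hj.
  by rewrite hYd.
have hXl : loss tau c X = \sum_(k < n) sl k + (ln K *+ n + p * (dotp S S / (tau * M))).
  have -> : ln K *+ n = \sum_(k < n) ln K by rewrite sumr_const card_ord.
  rewrite -hsumt mulr_sumr -big_split -big_split /=.
  by apply: eq_bigr => k _; rewrite /sl /L /a; ring.
have hle := hmin Y hY.
rewrite hXl hYl in hle.
have hsl_ge : 0 <= \sum_(k < n) sl k by apply: sumr_ge0 => k _.
have hq : 0 <= dotp S S / (tau * M).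
  by apply: divr_ge0; [exact: dotp_ge0 | apply: ltW; apply: mulr_gt0].
have hq' : 0 <= p * (dotp S S / (tau * M)) by apply: mulr_ge0 => //; exact: ltW.
have hsl0 : \sum_(k < n) sl k = 0 by lra.
have hq0 : p * (dotp S S / (tau * M)) = 0 by lra.
have hS : dotp S S = 0.
  move/eqP: hq0; rewrite mulf_eq0 (gt_eqF hp) /= mulf_eq0 invr_eq0 mulf_eq0.
  by rewrite (negbTE htau0) (negbTE hM0) !orbF => /eqP.
have hS0 : S = 0 by apply: dotp_eq0.
split; first exact: hS0.
have htk : forall k, t k = ts.
  move=> k; apply/eqP; rewrite -subr_eq0; apply/eqP.
  by rewrite ht hS0 dotp0l mul0r.
have hslk : forall k, sl k = 0.
  move=> k; exact: (psumr_eq0P (fun k _ => hsl k) hsl0).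
move=> i j hij.
have hL : L j = ln K.
  have := hslk j; rewrite /sl htk subrr mulr0 subr0 => /eqP; rewrite subr_eq0 => /eqP.
  by [].
have hpos : 0 < c + \sum_(j0 < n | j0 != j) expR (a j0 j).
  apply: (lt_le_trans hc); rewrite lerDl; apply: sumr_ge0 => l _; exact: ltW (expR_gt0 _).
have hsum : c + \sum_(j0 < n | j0 != j) expR (a j0 j) = K.
  by apply: ln_inj; rewrite ?posrE.
have hDs : \sum_(j0 < n | j0 != j) D j0 j = 0.
  move: hsum; rewrite sumE htk -/E /K => h.
  have : E * \sum_(j0 < n | j0 != j) D j0 j = 0 by lra.
  by move/eqP; rewrite mulf_eq0 (gt_eqF hE) /= => /eqP.
have hDij : D i j = 0.
  have H := @psumr_eq0P R _ (fun j0 => j0 != j) (fun j0 => D j0 j) (fun j0 _ => hD j0 j).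
  exact: (H hDs i hij).
have hexp : expR (a i j - t j) = 1 + (a i j - t j) by move: hDij; rewrite /D; lra.
have := @expR_eq1Dx R _ hexp; rewrite htk /a /ts => /eqP; rewrite subr_eq0 => /eqP h.
have : dotp (X i) (X j) = (dotp (X i) (X j) / tau) * tau by field.
by rewrite h mulrVK ?unitfE.
Qed.
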